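(* Let $\mathbf{G}_0=(\mathbf{L}_0,\mathbf{H}_0)$ be a non-trivial partial-monitoring game in which Learner has $N=2$ actions and Nature has $M$ actions ($M\ge1$ arbitrary). Then there is a $2\times M$ bandit game $\mathbf{G}'$ with $\mathbf{G}_0\le\mathbf{G}'$. Consequently the minimax regret of $\mathbf{G}_0$ is $\Theta(\sqrt{T})$, i.e. there are constants $0<c\le C$ (depending on $\mathbf{G}_0$ but not on $T$) with $c\sqrt{T}\le R_T^*(\mathbf{G}_0)\le C\sqrt{T}$ for all $T\ge1$.
   Context: A partial-monitoring game $\mathbf{G}=(\mathbf{L},\mathbf{H})$ is given by two real $N\times M$ matrices: the loss matrix $\mathbf{L}=(\ell_{ij})$ (entries in $[0,1]$ for the games under study; in intermediate constructions arbitrary real entries are allowed) and the feedback matrix $\mathbf{H}=(h_{ij})$. Write $\underline{n}=\{1,\dots,n\}$. Nature (an oblivious adversary) fixes an outcome sequence $J_1,J_2,\ldots\in\underline{M}$ in advance, hidden from Learner. At each time $t$, Learner chooses (possibly at random) an action $I_t\in\underline{N}$, as a function of his own internal randomization and the past feedbacks $h_{I_1,J_1},\dots,h_{I_{t-1},J_{t-1}}$; he then observes $h_{I_t,J_t}$ and suffers (without observing it) loss $\ell_{I_t,J_t}$. Such a rule is a strategy (algorithm) $\mathcal{A}$. The regret is $R_T(\mathcal{A},\mathbf{G})=\mathbb{E}\big[\sum_{t=1}^T\ell_{I_t,J_t}-\min_{i\in\underline{N}}\sum_{t=1}^T\ell_{i,J_t}\big]$, the minimax regret is $R_T^*(\mathbf{G})=\inf_{\mathcal{A}}\sup_{(J_1,\dots,J_T)\in\underline{M}^T}R_T(\mathcal{A},\mathbf{G})$.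 A game is trivial if either $R_T^*(\mathbf{G})=0$ for all $T$, or there is $c>0$ with $R_T^*(\mathbf{G})\ge cT$ for all $T$ (minimax regret is zero or grows linearly); otherwise non-trivial. A bandit game is a game with $\mathbf{H}=\mathbf{L}$. For two $N\times M$ games, $\mathbf{G}'\le\mathbf{G}$ (''$\mathbf{G}'$ is easier than $\mathbf{G}$'') means: for every algorithm $\mathcal{A}$ there is an algorithm $\mathcal{A}'$ such that, for every outcome sequence, $\mathcal{A}'$ played on $\mathbf{G}'$ chooses the same action sequence as $\mathcal{A}$ played on $\mathbf{G}$, and $R_T(\mathcal{A}',\mathbf{G}')\le R_T(\mathcal{A},\mathbf{G})$. *)

(* Defs.v *)
From Stdlib Require Import Reals List.
Import ListNotations.
Open Scope R_scope.

(* A matrix indexed by (action, outcome); only entries i < N, j < M matter. *)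
Definition matrix := nat -> nat -> R.

Fixpoint fsum (n : nat) (f : nat -> R) : R :=
  match n with O => 0 | S n' => fsum n' f + f n' end.

Fixpoint minupto (f : nat -> R) (n : nat) : R :=
  match n with O => f O | S n' => Rmin (minupto f n') (f n) end.

(* A (randomized) strategy of Learner, in behavioral form: given the history
   of its own past actions and the feedbacks received, a probability
   distribution over the next action. *)
Definition strategy := list (nat * R) -> nat -> R.

Definition valid_strategy (N : nat) (A : strategy) : Prop :=
  forall hist, (forall i, (i < N)%nat -> 0 <= A hist i) /\ fsum N (A hist) = 1.

(* Outcome sequences J_1, J_2, ... (indexed from 0) with values in {0..M-1}. *)
Definition valid_outcomes (M : nat) (J : nat -> nat) : Prop :=
  forall t, (J t < M)%nat.

Fixpoint exp_loss (N : nat) (L H : matrix) (A : strategy) (J : nat -> nat)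
    (hist : list (nat * R)) (t k : nat) : R :=
  match k with
  | O => 0
  | S k' => fsum N (fun i => A hist i *
             (L i (J t) + exp_loss N L H A J (hist ++ [(i, H i (J t))]) (S t) k'))
  end.

Fixpoint seqprob (H : matrix) (A : strategy) (J : nat -> nat)
    (hist : list (nat * R)) (t : nat) (a : list nat) : R :=
  match a with
  | [] => 1
  | i :: a' => A hist i * seqprob H A J (hist ++ [(i, H i (J t))]) (S t) a'
  end.

Definition regret (N : nat) (L H : matrix) (A : strategy) (J : nat -> nat) (T : nat) : R :=
  exp_loss N L H A J [] 0 T - minupto (fun i => fsum T (fun t => L i (J t))) (N - 1).

Definition is_sup (S : R -> Prop) (x : R) : Prop :=
  (forall y, S y -> y <= x) /\ (forall z, (forall y, S y -> y <= z) -> x <= z).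
Definition is_inf (S : R -> Prop) (x : R) : Prop :=
  (forall y, S y -> x <= y) /\ (forall z, (forall y, S y -> z <= y) -> z <= x).

Definition minimax_regret (N M : nat) (L H : matrix) (T : nat) (r : R) : Prop :=
  is_inf (fun x => exists A, valid_strategy N A /\
            is_sup (fun y => exists J, valid_outcomes M J /\ y = regret N L H A J T) x) r.

Definition trivial_game (N M : nat) (L H : matrix) : Prop :=
  (forall T, minimax_regret N M L H T 0) \/
  (exists c, 0 < c /\ forall T r, minimax_regret N M L H T r -> c * INR T <= r).

(* easier N M L' H' L H  :  G' = (L',H') <= G = (L,H) *)
Definition easier (N M : nat) (L' H' L H : matrix) : Prop :=
  forall A, valid_strategy N A ->
  exists A', valid_strategy N A' /\
    forall J, valid_outcomes M J ->
      (forall a, Forall (fun i => (i < N)%nat) a ->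
         seqprob H' A' J [] 0 a = seqprob H A J [] 0 a) /\
      (forall T, regret N L' H' A' J T <= regret N L H A J T).

(* Main.v *)
Require Import Defs.
From Stdlib Require Import Reals List Lra Lia Psatz FunctionalExtensionality Classical.
Import ListNotations.
Open Scope R_scope.


Lemma fsum_ext n f g : (forall i, (i < n)%nat -> f i = g i) -> fsum n f = fsum n g.
Proof. induction n; simpl; intros; auto. rewrite IHn by (intros; apply H; lia). rewrite H by lia. auto. Qed.

Lemma fsum_plus n f g : fsum n (fun i => f i + g i) = fsum n f + fsum n g.
Proof. induction n; simpl; [lra|]. rewrite IHn. lra. Qed.

Lemma fsum_scal n c f : fsum n (fun i => c * f i) = c * fsum n f.
Proof. induction n; simpl; [lra|]. rewrite IHn. lra. Qed.

Lemma fsum_minus n f g : fsum n (fun i => f i - g i) = fsum n f - fsum n g.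
Proof. induction n; simpl; [lra|]. rewrite IHn. lra. Qed.

Lemma fsum_zero n : fsum n (fun _ => 0) = 0.
Proof. induction n; simpl; lra. Qed.

Lemma fsum_const n c : fsum n (fun _ => c) = INR n * c.
Proof. induction n; simpl fsum; [simpl; lra|]. rewrite IHn, S_INR. lra. Qed.

Lemma fsum_le n f g : (forall i, (i < n)%nat -> f i <= g i) -> fsum n f <= fsum n g.
Proof. induction n; simpl; intros; [lra|]. assert (f n <= g n) by (apply H; lia).
 assert (fsum n f <= fsum n g) by (apply IHn; intros; apply H; lia). lra. Qed.

Lemma fsum_swap n m f : fsum n (fun i => fsum m (fun j => f i j)) = fsum m (fun j => fsum n (fun i => f i j)).
Proof. induction n; simpl. - now rewrite fsum_zero. - rewrite IHn, <- fsum_plus. auto. Qed.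

Lemma fsum_shift n f : fsum (S n) f = f 0%nat + fsum n (fun i => f (S i)).
Proof. induction n; simpl in *; [lra|]. rewrite IHn. lra. Qed.

Lemma fsum_split a b f : fsum (a + b) f = fsum a f + fsum b (fun k => f (a + k)%nat).
Proof. induction b; simpl. - rewrite Nat.add_0_r. lra. - rewrite Nat.add_succ_r. simpl. rewrite IHb. lra. Qed.

Lemma fsum_two f : fsum 2 f = f 0%nat + f 1%nat.
Proof. simpl. lra. Qed.

Lemma fsum_single n k f : (k < n)%nat -> (forall i, (i < n)%nat -> i <> k -> f i = 0) -> fsum n f = f k.
Proof. induction n; intros Hk H; [lia|]. simpl. destruct (Nat.eq_dec n k).
 - subst. rewrite (fsum_ext _ _ (fun _ => 0)). rewrite fsum_zero; lra. intros; apply H; lia.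
 - rewrite IHn by (try lia; intros; apply H; lia). rewrite (H n) by lia. lra. Qed.


Definition validJ M (J : nat -> nat) := forall t, (J t < M)%nat.

Lemma exp_loss_S N L H A J hist t k :
  exp_loss N L H A J hist t (S k) =
  fsum N (fun i => A hist i * (L i (J t) + exp_loss N L H A J (hist ++ [(i, H i (J t))]) (S t) k)).
Proof. reflexivity. Qed.

Lemma exp_loss_shift N M L L' g H A J :
  valid_strategy N A -> valid_outcomes M J ->
  (forall i j, (i < N)%nat -> (j < M)%nat -> L i j = L' i j + g j) ->
  forall k hist t, exp_loss N L H A J hist t k =
    exp_loss N L' H A J hist t k + fsum k (fun s => g (J (t + s)%nat)).
Proof.
  intros HA HJ HL k. induction k; intros hist t; simpl exp_loss.
  - simpl. lra.
  - rewrite (fsum_ext N _ (fun i => A hist i * (L' i (J t) + exp_loss N L' H A J (hist ++ [(i, H i (J t))]) (S t) k)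
        + A hist i * (g (J t) + fsum k (fun s => g (J (S t + s)%nat))))).
    2:{ intros. rewrite HL, IHk; auto. ring. }
    rewrite fsum_plus. set (c := g (J t) + fsum k (fun s => g (J (S t + s)%nat))).
    rewrite (fsum_ext N (fun i => A hist i * c) (fun i => c * A hist i)) by (intros; ring).
    rewrite fsum_scal. destruct (HA hist) as [_ H1]. rewrite H1. unfold c.
    rewrite fsum_shift. rewrite Nat.add_0_r.
    rewrite (fsum_ext k (fun i => g (J (t + S i)%nat)) (fun s => g (J (S t + s)%nat))) by (intros; f_equal; f_equal; lia).
    lra.
Qed.

Lemma exp_loss_scal N L H A J a :
  forall k hist t, exp_loss N (fun i j => a * L i j) H A J hist t k = a * exp_loss N L H A J hist t k.
Proof.
  induction k; intros; simpl exp_loss. lra.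
  rewrite <- fsum_scal. apply fsum_ext. intros. rewrite IHk. ring.
Qed.

Lemma exp_loss_mono N M L L' H A J :
  valid_strategy N A -> valid_outcomes M J ->
  (forall i j, (i < N)%nat -> (j < M)%nat -> L i j <= L' i j) ->
  forall k hist t, exp_loss N L H A J hist t k <= exp_loss N L' H A J hist t k.
Proof.
  intros HA HJ HL. induction k; intros; simpl exp_loss. lra.
  apply fsum_le. intros i Hi. destruct (HA hist) as [Hp _]. specialize (Hp i Hi).
  apply Rmult_le_compat_l; auto. specialize (HL i (J t) Hi (HJ t)). specialize (IHk (hist ++ [(i, H i (J t))]) (S t)). lra.
Qed.

Lemma exp_loss_local N L H A J1 J2 k : forall hist t,
  (forall s, (t <= s)%nat -> J1 s = J2 s) ->
  exp_loss N L H A J1 hist t k = exp_loss N L H A J2 hist t k.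
Proof.
  induction k; intros; simpl; auto. apply fsum_ext; intros.
  rewrite (H0 t) by lia. rewrite IHk; auto. intros; apply H0; lia.
Qed.

Lemma exp_loss_zero N H A J : forall k hist t, exp_loss N (fun _ _ => 0) H A J hist t k = 0.
Proof. induction k; intros; simpl; auto. rewrite (fsum_ext N _ (fun _ => 0)). apply fsum_zero.
 intros. rewrite IHk. ring. Qed.

Lemma exp_loss_nonneg N M L H A J :
  valid_strategy N A -> valid_outcomes M J ->
  (forall i j, (i < N)%nat -> (j < M)%nat -> 0 <= L i j) ->
  forall k hist t, 0 <= exp_loss N L H A J hist t k.
Proof.
  intros. rewrite <- (exp_loss_zero N H A J k hist t).
  apply (exp_loss_mono N M); auto.
Qed.


Definition upd (J : nat -> nat) (t j : nat) : nat -> nat := fun s => if Nat.eqb s t then j else J s.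

Fixpoint avgJ (M : nat) (rho : nat -> R) (k t : nat) (F : (nat -> nat) -> R) (J : nat -> nat) : R :=
  match k with
  | O => F J
  | S k' => fsum M (fun j => rho j * avgJ M rho k' (S t) F (upd J t j))
  end.

Definition distr (M : nat) (rho : nat -> R) := (forall j, (j < M)%nat -> 0 <= rho j) /\ fsum M rho = 1.

Lemma upd_at J t j : upd J t j t = j.
Proof. unfold upd. now rewrite Nat.eqb_refl. Qed.
Lemma upd_ne J t j s : s <> t -> upd J t j s = J s.
Proof. unfold upd. intros. destruct (Nat.eqb_spec s t); auto; lia. Qed.

Lemma avg_ext M rho k : forall t F G J,
  (forall J', (forall s, (s < t)%nat -> J' s = J s) -> F J' = G J') ->
  avgJ M rho k t F J = avgJ M rho k t G J.
Proof.
  induction k; intros; simpl. apply H; auto.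
  apply fsum_ext; intros. f_equal. apply IHk. intros. apply H. intros.
  rewrite H1 by lia. apply upd_ne. lia.
Qed.

Lemma avg_plus M rho k : forall t F G J,
  avgJ M rho k t (fun J' => F J' + G J') J = avgJ M rho k t F J + avgJ M rho k t G J.
Proof. induction k; intros; simpl; auto. rewrite <- fsum_plus. apply fsum_ext; intros. rewrite IHk. ring. Qed.

Lemma avg_scal M rho k : forall t c F J,
  avgJ M rho k t (fun J' => c * F J') J = c * avgJ M rho k t F J.
Proof. induction k; intros; simpl; auto. rewrite <- fsum_scal. apply fsum_ext; intros. rewrite IHk. ring. Qed.

Lemma avg_minus M rho k t F G J :
  avgJ M rho k t (fun J' => F J' - G J') J = avgJ M rho k t F J - avgJ M rho k t G J.
Proof.
  unfold Rminus. rewrite avg_plus. f_equal.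
  rewrite (avg_ext M rho k t (fun J' => - G J') (fun J' => (-1) * G J')) by (intros; ring).
  rewrite avg_scal. ring.
Qed.

Lemma avg_const M rho k : distr M rho -> forall t c J, avgJ M rho k t (fun _ => c) J = c.
Proof. intros [_ Hs]. induction k; intros; simpl; auto.
 rewrite (fsum_ext M _ (fun j => c * rho j)) by (intros; rewrite IHk; ring). rewrite fsum_scal, Hs. ring. Qed.

Lemma avg_zero M rho k : forall t J, avgJ M rho k t (fun _ => 0) J = 0.
Proof. induction k; intros; simpl; auto. rewrite (fsum_ext M _ (fun _ => 0)). apply fsum_zero. intros; rewrite IHk; ring. Qed.

Lemma avg_fsum M rho k n : forall t F J,
  avgJ M rho k t (fun J' => fsum n (fun i => F i J')) J = fsum n (fun i => avgJ M rho k t (F i) J).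
Proof.
  induction n; intros; simpl. apply avg_zero.
  rewrite avg_plus. rewrite IHn. auto.
Qed.

Lemma upd_valid M J t j : valid_outcomes M J -> (j < M)%nat -> valid_outcomes M (upd J t j).
Proof. intros HJ Hj s. unfold upd. destruct (Nat.eqb s t); auto. Qed.

Lemma avg_le M rho k : distr M rho -> forall t F G J,
  (forall J', valid_outcomes M J' -> F J' <= G J') -> valid_outcomes M J ->
  avgJ M rho k t F J <= avgJ M rho k t G J.
Proof.
  intros [Hp _]. induction k; intros; simpl; auto.
  apply fsum_le; intros. apply Rmult_le_compat_l; auto. apply IHk; auto. apply upd_valid; auto.
Qed.

Lemma avg_bound M rho k : distr M rho -> forall t F x J,
  (forall J', valid_outcomes M J' -> F J' <= x) -> valid_outcomes M J ->
  avgJ M rho k t F J <= x.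
Proof.
  intros. rewrite <- (avg_const M rho k H t x J). apply avg_le; auto.
Qed.

Lemma avg_local M rho t0 F :
  (forall J1 J2, (forall s, (t0 <= s)%nat -> J1 s = J2 s) -> F J1 = F J2) ->
  forall k t J1 J2, (t0 <= t)%nat -> (forall s, (t0 <= s)%nat -> J1 s = J2 s) ->
  avgJ M rho k t F J1 = avgJ M rho k t F J2.
Proof.
  intros HF. induction k; intros; simpl; auto.
  apply fsum_ext; intros. f_equal. apply IHk; [lia|]. intros. unfold upd.
  destruct (Nat.eqb s t); auto.
Qed.

Lemma avg_exp_step M rho N L H A k t hist J : distr M rho ->
  avgJ M rho (S k) t (fun J' => exp_loss N L H A J' hist t (S k)) J =
  fsum M (fun j => rho j * fsum N (fun i => A hist i * (L i j +
     avgJ M rho k (S t) (fun J' => exp_loss N L H A J' (hist ++ [(i, H i j)]) (S t) k) J))).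
Proof.
  intros Hd. simpl avgJ. apply fsum_ext; intros j Hj. f_equal.
  rewrite (avg_ext M rho k (S t) _ (fun J' => fsum N (fun i => A hist i * L i j +
     A hist i * exp_loss N L H A J' (hist ++ [(i, H i j)]) (S t) k))).
  2:{ intros. cbv beta. rewrite H0 by lia. rewrite upd_at. apply fsum_ext; intros; ring. }
  rewrite avg_fsum. apply fsum_ext; intros.
  rewrite avg_plus. rewrite avg_const by auto.
  rewrite (avg_scal M rho k (S t) (A hist i) (fun J' => exp_loss N L H A J' (hist ++ [(i, H i j)]) (S t) k)).
  rewrite (avg_local M rho (S t) (fun J' => exp_loss N L H A J' (hist ++ [(i, H i j)]) (S t) k) 
     (fun J1 J2 HJ => exp_loss_local N L H A J1 J2 k _ _ HJ) k (S t) (upd J t j) J); auto.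
  - ring.
  - intros; apply upd_ne; lia.
Qed.


Lemma sum_swap2 M N (rho a : nat -> R) f :
  fsum M (fun j => rho j * fsum N (fun i => a i * f i j)) =
  fsum N (fun i => a i * fsum M (fun j => rho j * f i j)).
Proof.
  rewrite (fsum_ext M _ (fun j => fsum N (fun i => a i * (rho j * f i j)))).
  2:{ intros. rewrite <- fsum_scal. apply fsum_ext; intros; ring. }
  rewrite fsum_swap. apply fsum_ext; intros. rewrite fsum_scal. auto.
Qed.

Lemma sum_mix M N rho a (L : nat -> nat -> R) X :
  fsum M (fun j => rho j * fsum N (fun i => a i * (L i j + X i j))) =
  fsum N (fun i => a i * (fsum M (fun j => rho j * L i j) + fsum M (fun j => rho j * X i j))).
Proof.
  rewrite sum_swap2. apply fsum_ext; intros. f_equal.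
  rewrite <- fsum_plus. apply fsum_ext; intros; ring.
Qed.

Definition meanL M (rho : nat -> R) (L : matrix) : matrix := fun i _ => fsum M (fun j => rho j * L i j).

Lemma avg_exp_mean M rho N L H A : distr M rho ->
  forall k hist t J,
  avgJ M rho k t (fun J' => exp_loss N L H A J' hist t k) J =
  avgJ M rho k t (fun J' => exp_loss N (meanL M rho L) H A J' hist t k) J.
Proof.
  intros Hd. induction k; intros; [reflexivity|].
  rewrite (avg_exp_step M rho N L H A k t hist J Hd). rewrite (avg_exp_step M rho N (meanL M rho L) H A k t hist J Hd). destruct Hd as [Hp Hs].
  rewrite sum_mix. rewrite sum_mix. apply fsum_ext; intros. f_equal. f_equal.
  - unfold meanL. symmetry. rewrite (fsum_ext M _ (fun j => fsum M (fun j0 => rho j0 * L i j0) * rho j)).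
    2:{ intros. ring. }
    rewrite fsum_scal, Hs. ring.
  - apply fsum_ext; intros. rewrite IHk. auto.
Qed.

Lemma avg_indist M P Q N (c : nat -> R) H A : distr M P -> distr M Q ->
  (forall i, (i < N)%nat -> forall g : R -> R,
     fsum M (fun j => P j * g (H i j)) = fsum M (fun j => Q j * g (H i j))) ->
  forall k hist t J,
  avgJ M P k t (fun J' => exp_loss N (fun i _ => c i) H A J' hist t k) J =
  avgJ M Q k t (fun J' => exp_loss N (fun i _ => c i) H A J' hist t k) J.
Proof.
  intros HP HQ HPQ. induction k; intros; [reflexivity|].
  rewrite (avg_exp_step M P N _ H A k t hist J HP).
  rewrite (avg_exp_step M Q N _ H A k t hist J HQ).
  rewrite (sum_swap2 M N P (A hist)). rewrite (sum_swap2 M N Q (A hist)). apply fsum_ext; intros. f_equal.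
  transitivity (fsum M (fun j => Q j * (c i + avgJ M P k (S t)
     (fun J' => exp_loss N (fun i _ => c i) H A J' (hist ++ [(i, H i j)]) (S t) k) J))).
  { exact (HPQ i H0 (fun h => c i + avgJ M P k (S t)
     (fun J' => exp_loss N (fun i _ => c i) H A J' (hist ++ [(i, h)]) (S t) k) J)). }
  apply fsum_ext; intros. rewrite IHk. auto.
Qed.

Definition Xsum (d : nat -> R) (k t : nat) (J : nat -> nat) := fsum k (fun s => d (J (t + s)%nat)).

Lemma Xsum_S d k t J : Xsum d (S k) t J = d (J t) + Xsum d k (S t) J.
Proof. unfold Xsum. rewrite fsum_shift, Nat.add_0_r. f_equal. apply fsum_ext; intros; f_equal; f_equal; lia. Qed.

Definition mom M (rho d : nat -> R) (n : nat) := fsum M (fun j => rho j * d j ^ n).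

Lemma avg_step_gen M rho k t (P : R -> R) c d J :
  avgJ M rho (S k) t (fun J' => P (c + Xsum d (S k) t J')) J =
  fsum M (fun j => rho j * avgJ M rho k (S t) (fun J' => P ((c + d j) + Xsum d k (S t) J')) J).
Proof.
  simpl avgJ at 1. apply fsum_ext; intros j Hj. f_equal.
  rewrite (avg_ext M rho k (S t) _ (fun J' => P ((c + d j) + Xsum d k (S t) J'))).
  2:{ intros J' HJ'. rewrite Xsum_S. rewrite HJ' by lia. rewrite upd_at. f_equal. ring. }
  apply (avg_local M rho (S t)); auto.
  - intros J1 J2 HJ. f_equal. f_equal. unfold Xsum. apply fsum_ext; intros; f_equal; apply HJ; lia.
  - intros; apply upd_ne; lia.
Qed.

Lemma poly4_sum M rho d a0 a1 a2 a3 a4 :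
  fsum M (fun j => rho j * (a0 + a1 * d j + a2 * d j ^ 2 + a3 * d j ^ 3 + a4 * d j ^ 4)) =
  a0 * mom M rho d 0 + a1 * mom M rho d 1 + a2 * mom M rho d 2 + a3 * mom M rho d 3 + a4 * mom M rho d 4.
Proof.
  unfold mom. rewrite <- !fsum_scal. rewrite <- !fsum_plus. apply fsum_ext; intros. simpl. ring.
Qed.

Lemma mom0 M rho d : fsum M rho = 1 -> mom M rho d 0 = 1.
Proof. intros Hs. unfold mom. rewrite <- Hs. apply fsum_ext. intros. simpl. ring. Qed.

Lemma avg_X0 M rho k d : distr M rho -> forall t c J,
  avgJ M rho k t (fun J' => c + Xsum d k t J') J = c + INR k * mom M rho d 1.
Proof.
  intros [Hp Hs]. induction k; intros.
  - simpl. unfold Xsum. simpl. ring.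
  - rewrite (avg_step_gen M rho k t (fun x => x)). 
    rewrite (fsum_ext M _ (fun j => rho j * ((c + INR k * mom M rho d 1) + 1 * d j + 0 * d j ^ 2 + 0 * d j ^ 3 + 0 * d j ^ 4))).
    2:{ intros. rewrite IHk. ring. }
    rewrite poly4_sum. rewrite (mom0 M rho d Hs), S_INR. ring.
Qed.

Lemma avg_X2 M rho k d : distr M rho -> mom M rho d 1 = 0 -> forall t c J,
  avgJ M rho k t (fun J' => (c + Xsum d k t J') ^ 2) J = c ^ 2 + INR k * mom M rho d 2.
Proof.
  intros [Hp Hs] H1. induction k; intros.
  - simpl. unfold Xsum. simpl. ring.
  - rewrite (avg_step_gen M rho k t (fun x => x ^ 2)). 
    rewrite (fsum_ext M _ (fun j => rho j * ((c ^ 2 + INR k * mom M rho d 2) + (2 * c) * d j + 1 * d j ^ 2 + 0 * d j ^ 3 + 0 * d j ^ 4))).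
    2:{ intros. rewrite IHk. ring. }
    rewrite poly4_sum. rewrite (mom0 M rho d Hs), H1, S_INR. ring.
Qed.

Lemma avg_X4 M rho k d : distr M rho -> mom M rho d 1 = 0 -> forall t c J,
  avgJ M rho k t (fun J' => (c + Xsum d k t J') ^ 4) J =
  c ^ 4 + 6 * c ^ 2 * INR k * mom M rho d 2 + 4 * c * INR k * mom M rho d 3 + INR k * mom M rho d 4
  + 3 * INR k * (INR k - 1) * mom M rho d 2 ^ 2.
Proof.
  intros [Hp Hs] H1. induction k; intros.
  - simpl. unfold Xsum. simpl. ring.
  - rewrite (avg_step_gen M rho k t (fun x => x ^ 4)).
    set (m2 := mom M rho d 2). set (m3 := mom M rho d 3). set (m4 := mom M rho d 4). set (K := INR k).
    rewrite (fsum_ext M _ (fun j => rho j * ((c ^ 4 + 6 * c ^ 2 * K * m2 + 4 * c * K * m3 + K * m4 + 3 * K * (K - 1) * m2 ^ 2)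
       + (4 * c ^ 3 + 12 * c * K * m2 + 4 * K * m3) * d j + (6 * c ^ 2 + 6 * K * m2) * d j ^ 2 + (4 * c) * d j ^ 3 + 1 * d j ^ 4))).
    2:{ intros. rewrite IHk. unfold K, m2, m3, m4. ring. }
    rewrite poly4_sum. fold m2 m3 m4. rewrite (mom0 M rho d Hs), H1, S_INR. fold K. ring.
Qed.


Definition dot M (u v : nat -> R) := fsum M (fun j => u j * v j).
Definition inspan M n (gen : nat -> nat -> R) (d : nat -> R) :=
  exists c : nat -> R, forall j, (j < M)%nat -> d j = fsum n (fun k => c k * gen k j).

Lemma fsum_pos M f : (forall j, (j < M)%nat -> 0 <= f j) -> forall j0, (j0 < M)%nat -> 0 < f j0 -> 0 < fsum M f.
Proof.
  induction M; intros; [lia|]. simpl.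
  assert (0 <= fsum M f) by (rewrite <- (fsum_zero M); apply fsum_le; intros; apply H; lia).
  destruct (Nat.eq_dec j0 M). subst. lra.
  assert (0 < fsum M f) by (apply (IHM (fun j Hj => H j ltac:(lia)) j0); auto; lia).
  specialize (H M ltac:(lia)). lra.
Qed.

Lemma dot_lin M a b v beta : dot M (fun j => a j - beta * b j) v = dot M a v - beta * dot M b v.
Proof. unfold dot. rewrite <- fsum_scal, <- fsum_minus. apply fsum_ext; intros; ring. Qed.
Lemma dot_lin2 M u a b beta : dot M u (fun j => a j - beta * b j) = dot M u a - beta * dot M u b.
Proof. unfold dot. rewrite <- fsum_scal, <- fsum_minus. apply fsum_ext; intros; ring. Qed.

Lemma dot_span M n gen w a : (forall k, (k < n)%nat -> dot M w (gen k) = 0) ->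
  dot M w (fun j => fsum n (fun k => a k * gen k j)) = 0.
Proof.
  intros H. unfold dot.
  rewrite (fsum_ext M _ (fun j => fsum n (fun k => a k * (w j * gen k j)))).
  2:{ intros. rewrite <- fsum_scal. apply fsum_ext; intros; ring. }
  rewrite fsum_swap. rewrite (fsum_ext n _ (fun k => 0)). apply fsum_zero.
  intros. rewrite fsum_scal. unfold dot in H. rewrite H; auto. ring.
Qed.

Lemma fredholm M : forall n gen d, inspan M n gen d \/
  exists w, (forall k, (k < n)%nat -> dot M w (gen k) = 0) /\ dot M w d <> 0.
Proof.
  induction n; intros gen d.
  - destruct (classic (forall j, (j < M)%nat -> d j = 0)) as [Hz|Hnz].
    + left. exists (fun _ => 0). intros. simpl. auto.
    + right. exists d. split. intros; lia.
      apply not_all_ex_not in Hnz. destruct Hnz as [j0 Hj0].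
      apply imply_to_and in Hj0. destruct Hj0.
      assert (0 < dot M d d). { unfold dot. assert (Hnn : forall j, (j < M)%nat -> 0 <= d j * d j) by (intros; nra).
        apply (fsum_pos M _ Hnn j0); auto.
        assert (d j0 * d j0 > 0) by (apply Rsqr_pos_lt in H0; unfold Rsqr in H0; lra). lra. }
      lra.
  - destruct (IHn gen (gen n)) as [[a Ha] | [u [Hu Huv]]].
    + destruct (IHn gen d) as [[c Hc] | [w [Hw Hwd]]].
      * left. exists (fun k => if Nat.eqb k n then 0 else c k). intros. simpl.
        rewrite Nat.eqb_refl. rewrite Hc by auto. rewrite Rmult_0_l, Rplus_0_r.
        apply fsum_ext; intros. destruct (Nat.eqb_spec i n); [lia|auto].
      * right. exists w. split; auto. intros. destruct (Nat.eq_dec k n).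
        -- subst. rewrite <- (dot_span M n gen w a Hw). unfold dot. apply fsum_ext. intros. rewrite Ha; auto.
        -- apply Hw. lia.
    + set (alpha := dot M u d / dot M u (gen n)).
      destruct (IHn gen (fun j => d j - alpha * gen n j)) as [[c Hc] | [w [Hw Hwd]]].
      * left. exists (fun k => if Nat.eqb k n then alpha else c k). intros. simpl.
        rewrite Nat.eqb_refl. 
        rewrite (fsum_ext n _ (fun k => c k * gen k j)).
        2:{ intros. destruct (Nat.eqb_spec i n); [lia|auto]. }
        rewrite <- Hc by auto. ring.
      * right. exists (fun j => w j - (dot M w (gen n) / dot M u (gen n)) * u j). split.
        -- intros. rewrite dot_lin. destruct (Nat.eq_dec k n).
           ++ subst. field. auto.
           ++ rewrite (Hw k ltac:(lia)), (Hu k ltac:(lia)). ring.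
        -- rewrite dot_lin. rewrite dot_lin2 in Hwd.
           intro Hc. apply Hwd.
           rewrite <- Hc. unfold alpha. field. auto.
Qed.

Definition indR (a b : R) : R := if Req_EM_T a b then 1 else 0.

Lemma ind_sym a b : indR a b = indR b a.
Proof. unfold indR. destruct (Req_EM_T a b), (Req_EM_T b a); subst; auto; congruence. Qed.
Lemma ind_nonneg a b : 0 <= indR a b.
Proof. unfold indR. destruct (Req_EM_T a b); lra. Qed.

Lemma orth_all M (h : nat -> R) (w : nat -> R) :
  (forall k, (k < M)%nat -> fsum M (fun j => w j * indR (h j) (h k)) = 0) ->
  forall g : R -> R, fsum M (fun j => w j * g (h j)) = 0.
Proof.
  intros Hw g. set (n := fun s => fsum M (fun k => indR (h k) s)).
  assert (Hn : forall j, (j < M)%nat -> 0 < n (h j)).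
  { intros. unfold n. apply (fsum_pos M _ (fun k _ => ind_nonneg _ _) j); auto. unfold indR.
    destruct (Req_EM_T (h j) (h j)); [lra|congruence]. }
  rewrite (fsum_ext M _ (fun j => w j * fsum M (fun k => indR (h j) (h k) * (g (h k) / n (h k))))).
  2:{ intros j Hj. f_equal.
      rewrite (fsum_ext M _ (fun k => (g (h j) / n (h j)) * indR (h k) (h j))).
      2:{ intros k Hk. unfold indR. destruct (Req_EM_T (h j) (h k)), (Req_EM_T (h k) (h j)); try congruence.
          rewrite e. ring. ring. }
      rewrite fsum_scal. fold (n (h j)). field. specialize (Hn j Hj). lra. }
  rewrite (fsum_ext M _ (fun j => fsum M (fun k => (g (h k) / n (h k)) * (w j * indR (h j) (h k))))).
  2:{ intros. rewrite <- fsum_scal. apply fsum_ext; intros; ring. }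
  rewrite fsum_swap. rewrite (fsum_ext M _ (fun k => 0)). apply fsum_zero.
  intros. rewrite fsum_scal. rewrite Hw; auto. ring.
Qed.


Lemma ln_le_minus1 z : 0 < z -> ln z <= z - 1.
Proof.
  intros Hz. destruct (Rle_or_lt (ln z) (z - 1)); auto.
  apply exp_increasing in H. rewrite exp_ln in H by auto. pose proof (exp_ineq1_le (z - 1)). lra.
Qed.

Lemma exp_neg_bound y : 0 <= y -> exp (- y) <= 1 - y + y ^ 2.
Proof.
  intros Hy. rewrite exp_Ropp.
  assert (HE : exp y = exp (y/2) * exp (y/2)) by (rewrite <- exp_plus; f_equal; field).
  pose proof (exp_ineq1_le (y/2)). pose proof (exp_pos (y/2)).
  assert (Hq : (1 + y/2) * (1 + y/2) <= exp y) by (rewrite HE; nra).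
  assert (0 < exp y) by apply exp_pos.
  apply (Rmult_le_reg_r (exp y)); auto. rewrite Rinv_l by lra.
  assert (0 < 1 - y + y ^ 2) by nra.
  assert (1 <= (1 - y + y ^ 2) * ((1 + y/2) * (1 + y/2))) by nra.
  nra.
Qed.

Lemma single_step p l eta : 0 < p <= 1 -> 0 <= l -> 0 < eta ->
  p * (l + / eta * ln (1 - p + p * exp (- (eta * l / p)))) <= eta * l ^ 2.
Proof.
  intros Hp Hl He. set (y := eta * l / p).
  assert (Hy : 0 <= y) by (unfold y; apply Rmult_le_pos; [nra| left; apply Rinv_0_lt_compat; lra]).
  pose proof (exp_neg_bound y Hy). pose proof (exp_pos (- y)).
  set (z := 1 - p + p * exp (- y)).
  assert (Hz : 0 < z) by (unfold z; nra).
  pose proof (ln_le_minus1 z Hz).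
  assert (z - 1 <= - p * y + p * y ^ 2) by (unfold z; nra).
  assert (Hpy : p * y = eta * l) by (unfold y; field; lra).
  assert (Hpy2 : p * y ^ 2 = eta ^ 2 * l ^ 2 / p) by (unfold y; field; lra).
  assert (ln z <= - (eta * l) + eta ^ 2 * l ^ 2 / p) by lra.
  assert (/ eta * ln z <= / eta * (- (eta * l) + eta ^ 2 * l ^ 2 / p)).
  { apply Rmult_le_compat_l; auto. left; apply Rinv_0_lt_compat; auto. }
  replace (/ eta * (- (eta * l) + eta ^ 2 * l ^ 2 / p)) with (- l + eta * l ^ 2 / p) in H4 by (field; lra).
  assert (p * (l + / eta * ln z) <= p * (l + (- l + eta * l ^ 2 / p))) by (apply Rmult_le_compat_l; lra).
  replace (p * (l + (- l + eta * l ^ 2 / p))) with (eta * l ^ 2) in H5 by (field; lra).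
  exact H5.
Qed.

Section Exp3.
Variable eta : R.
Variables psi0 psi1 : R -> R.

Definition W (s : R * R) := exp (- (eta * fst s)) + exp (- (eta * snd s)).
Definition pr0 (s : R * R) := exp (- (eta * fst s)) / W s.
Definition pr1 (s : R * R) := exp (- (eta * snd s)) / W s.
Definition e3step (s : R * R) (x : nat * R) : R * R :=
  if Nat.eqb (fst x) 0 then (fst s + psi0 (snd x) / pr0 s, snd s)
  else (fst s, snd s + psi1 (snd x) / pr1 s).
Definition e3state (hist : list (nat * R)) := fold_left e3step hist (0, 0).
Definition exp3 : strategy := fun hist i =>
  if Nat.eqb i 0 then pr0 (e3state hist) else if Nat.eqb i 1 then pr1 (e3state hist) else 0.
Definition Phi (s : R * R) := - (/ eta * ln (W s)).
Definition sel (a : nat) (s : R * R) := if Nat.eqb a 0 then fst s else snd s.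

Lemma W_pos s : 0 < W s.
Proof. unfold W. pose proof (exp_pos (- (eta * fst s))). pose proof (exp_pos (- (eta * snd s))). lra. Qed.
Lemma pr_sum s : pr0 s + pr1 s = 1.
Proof. unfold pr0, pr1. pose proof (W_pos s). field_simplify; [|lra]. unfold W. field. unfold W in H; lra. Qed.
Lemma pr0_pos s : 0 < pr0 s.
Proof. unfold pr0. pose proof (W_pos s). pose proof (exp_pos (- (eta * fst s))). apply Rdiv_lt_0_compat; auto. Qed.
Lemma pr1_pos s : 0 < pr1 s.
Proof. unfold pr1. pose proof (W_pos s). pose proof (exp_pos (- (eta * snd s))). apply Rdiv_lt_0_compat; auto. Qed.

Lemma exp3_valid : valid_strategy 2 exp3.
Proof.
  intros hist. split.
  - intros i Hi. unfold exp3. destruct i as [|[|]]; simpl; try lia.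
    + left; apply pr0_pos. + left; apply pr1_pos.
  - rewrite fsum_two. unfold exp3. simpl. apply pr_sum.
Qed.

Lemma W_step0 s l : W (fst s + l / pr0 s, snd s) / W s = 1 - pr0 s + pr0 s * exp (- (eta * l / pr0 s)).
Proof.
  pose proof (W_pos s). pose proof (pr_sum s). pose proof (pr0_pos s).
  unfold W at 1. simpl. replace (- (eta * (fst s + l / pr0 s))) with (- (eta * fst s) + - (eta * l / pr0 s)) by (field; lra).
  rewrite exp_plus. replace (1 - pr0 s) with (pr1 s) by lra. unfold pr0 at 2, pr1. field. lra.
Qed.

Lemma W_step1 s l : W (fst s, snd s + l / pr1 s) / W s = 1 - pr1 s + pr1 s * exp (- (eta * l / pr1 s)).
Proof.
  pose proof (W_pos s). pose proof (pr_sum s). pose proof (pr1_pos s).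
  unfold W at 1. simpl. replace (- (eta * (snd s + l / pr1 s))) with (- (eta * snd s) + - (eta * l / pr1 s)) by (field; lra).
  rewrite exp_plus. replace (1 - pr1 s) with (pr0 s) by lra. unfold pr1 at 2, pr0. field. lra.
Qed.

Lemma Phi_diff s s' : Phi s' - Phi s = - (/ eta * ln (W s' / W s)).
Proof.
  unfold Phi. unfold Rdiv. rewrite ln_mult by (try apply W_pos; apply Rinv_0_lt_compat, W_pos).
  rewrite ln_Rinv by apply W_pos. ring.
Qed.

Lemma step_pot s l0 l1 B : 0 < eta -> 0 <= l0 <= B -> 0 <= l1 <= B ->
  pr0 s * (l0 - (Phi (fst s + l0 / pr0 s, snd s) - Phi s)) +
  pr1 s * (l1 - (Phi (fst s, snd s + l1 / pr1 s) - Phi s)) <= 2 * eta * B ^ 2.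
Proof.
  intros He H0 H1. rewrite !Phi_diff. rewrite W_step0, W_step1.
  pose proof (pr_sum s). pose proof (pr0_pos s). pose proof (pr1_pos s).
  pose proof (single_step (pr0 s) l0 eta ltac:(lra) ltac:(lra) He).
  pose proof (single_step (pr1 s) l1 eta ltac:(lra) ltac:(lra) He).
  replace (eta * l0 / pr0 s) with (eta * l0 / pr0 s) in * by auto.
  assert (l0 ^ 2 <= B ^ 2) by nra. assert (l1 ^ 2 <= B ^ 2) by nra.
  assert (eta * l0 ^ 2 <= eta * B ^ 2) by nra. assert (eta * l1 ^ 2 <= eta * B ^ 2) by nra.
  lra.
Qed.

End Exp3.


Definition ell (psi0 psi1 : R -> R) (H : matrix) : matrix :=
  fun i j => if Nat.eqb i 0 then psi0 (H 0%nat j) else psi1 (H 1%nat j).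

Lemma e3state_app eta psi0 psi1 hist x :
  e3state eta psi0 psi1 (hist ++ [x]) = e3step eta psi0 psi1 (e3state eta psi0 psi1 hist) x.
Proof. unfold e3state. rewrite fold_left_app. reflexivity. Qed.

Lemma fsum_shift_t k t (f : nat -> R) : fsum (S k) (fun s => f (t + s)%nat) = f t + fsum k (fun s => f (S t + s)%nat).
Proof. rewrite fsum_shift. rewrite Nat.add_0_r. f_equal. apply fsum_ext; intros; f_equal; lia. Qed.

Lemma exp3_main eta psi0 psi1 H J B a : 0 < eta -> (a < 2)%nat ->
  (forall t, 0 <= psi0 (H 0%nat (J t)) <= B /\ 0 <= psi1 (H 1%nat (J t)) <= B) ->
  forall k hist t,
  exp_loss 2 (ell psi0 psi1 H) H (exp3 eta psi0 psi1) J hist t k + Phi eta (e3state eta psi0 psi1 hist)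
   <= sel a (e3state eta psi0 psi1 hist) + fsum k (fun s => ell psi0 psi1 H a (J (t + s)%nat))
      + INR k * (2 * eta * B ^ 2).
Proof.
  intros He Ha HB. induction k; intros hist t.
  - simpl. unfold Phi, sel. set (s := e3state eta psi0 psi1 hist).
    assert (W eta s >= exp (- (eta * (if Nat.eqb a 0 then fst s else snd s)))).
    { unfold W. pose proof (exp_pos (- (eta * fst s))). pose proof (exp_pos (- (eta * snd s))).
      destruct (Nat.eqb a 0); lra. }
    assert (ln (exp (- (eta * (if Nat.eqb a 0 then fst s else snd s)))) <= ln (W eta s)).
    { destruct (Req_dec (W eta s) (exp (- (eta * (if Nat.eqb a 0 then fst s else snd s))))) as [E|E].
      rewrite E; lra. left. apply ln_increasing. apply exp_pos. lra. }
    rewrite ln_exp in H1.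
    assert (/ eta * (- (eta * (if Nat.eqb a 0 then fst s else snd s))) <= / eta * ln (W eta s)).
    { apply Rmult_le_compat_l; auto. left; apply Rinv_0_lt_compat; auto. }
    replace (/ eta * (- (eta * (if Nat.eqb a 0 then fst s else snd s)))) with (- (if Nat.eqb a 0 then fst s else snd s)) in H2 by (field; lra).
    lra.
  - rewrite exp_loss_S, fsum_two. unfold exp3 at 1 3. simpl Nat.eqb. cbv iota.

    set (s := e3state eta psi0 psi1 hist).
    pose proof (IHk (hist ++ [(0%nat, H 0%nat (J t))]) (S t)) as I0.
    pose proof (IHk (hist ++ [(1%nat, H 1%nat (J t))]) (S t)) as I1.
    rewrite e3state_app in I0, I1. fold s in I0, I1.
    unfold e3step in I0, I1. cbn [fst snd Nat.eqb] in I0, I1.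
    set (l0 := psi0 (H 0%nat (J t))) in *. set (l1 := psi1 (H 1%nat (J t))) in *.
    set (E0 := exp_loss 2 (ell psi0 psi1 H) H (exp3 eta psi0 psi1) J (hist ++ [(0%nat, H 0%nat (J t))]) (S t) k) in *.
    set (E1 := exp_loss 2 (ell psi0 psi1 H) H (exp3 eta psi0 psi1) J (hist ++ [(1%nat, H 1%nat (J t))]) (S t) k) in *.
    set (R0 := fsum k (fun s0 => ell psi0 psi1 H a (J (S t + s0)%nat))) in *.
    rewrite (fsum_shift_t k t (fun x => ell psi0 psi1 H a (J x))). fold R0. rewrite S_INR.
    assert (Hl0 : ell psi0 psi1 H 0%nat (J t) = l0) by reflexivity.
    assert (Hl1 : ell psi0 psi1 H 1%nat (J t) = l1) by reflexivity.
    rewrite Hl0, Hl1.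
    destruct (HB t) as [B0 B1]. fold l0 l1 in B0, B1.
    pose proof (step_pot eta s l0 l1 B He B0 B1) as SP.
    pose proof (pr_sum eta s). pose proof (pr0_pos eta s). pose proof (pr1_pos eta s).
    assert (Hsel : pr0 eta s * sel a (fst s + l0 / pr0 eta s, snd s) + pr1 eta s * sel a (fst s, snd s + l1 / pr1 eta s)
       = sel a s + ell psi0 psi1 H a (J t)).
    { assert (Q0 : pr0 eta s * (l0 / pr0 eta s) = l0) by (field; lra).
      assert (Q1 : pr1 eta s * (l1 / pr1 eta s) = l1) by (field; lra).
      replace (pr1 eta s) with (1 - pr0 eta s) in Q1 |- * by lra.
      unfold sel, ell. destruct a as [|[|]]; cbn [Nat.eqb fst snd]; try lia; fold l0 l1.
      - rewrite Rmult_plus_distr_l, Q0. ring.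
      - rewrite Rmult_plus_distr_l, Q1. ring. }
    assert (pr0 eta s * (E0 + Phi eta (fst s + l0 / pr0 eta s, snd s)) <=
            pr0 eta s * (sel a (fst s + l0 / pr0 eta s, snd s) + R0 + INR k * (2 * eta * B ^ 2))) by (apply Rmult_le_compat_l; lra).
    assert (pr1 eta s * (E1 + Phi eta (fst s, snd s + l1 / pr1 eta s)) <=
            pr1 eta s * (sel a (fst s, snd s + l1 / pr1 eta s) + R0 + INR k * (2 * eta * B ^ 2))) by (apply Rmult_le_compat_l; lra).
    nra.
Qed.


Lemma minupto1 f : minupto f (2 - 1) = Rmin (f 0%nat) (f 1%nat).
Proof. reflexivity. Qed.

Lemma fsum_abs_le M f j : (j < M)%nat -> (forall i, (i < M)%nat -> 0 <= f i) -> f j <= fsum M f.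
Proof.
  intros Hj Hf. induction M; [lia|]. simpl.
  assert (0 <= fsum M f) by (rewrite <- (fsum_zero M); apply fsum_le; intros; apply Hf; lia).
  destruct (Nat.eq_dec j M). subst. lra.
  assert (f j <= fsum M f) by (apply IHM; [lia|intros; apply Hf; lia]). specialize (Hf M ltac:(lia)). lra.
Qed.

Section Up.
Variables (M : nat) (L0 H0 : matrix) (phi0 phi1 : R -> R).
Hypothesis Hphi : forall j, (j < M)%nat -> L0 0%nat j - L0 1%nat j = phi0 (H0 0%nat j) - phi1 (H0 1%nat j).

Definition B0 := fsum M (fun j => Rabs (phi0 (H0 0%nat j)) + Rabs (phi1 (H0 1%nat j))).
Definition psi0 s := phi0 s + B0.
Definition psi1 s := phi1 s + B0.

Lemma B0_bound j : (j < M)%nat -> Rabs (phi0 (H0 0%nat j)) + Rabs (phi1 (H0 1%nat j)) <= B0.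
Proof. intros. unfold B0. apply (fsum_abs_le M (fun j => Rabs (phi0 (H0 0%nat j)) + Rabs (phi1 (H0 1%nat j)))); auto.
  intros. pose proof (Rabs_pos (phi0 (H0 0%nat i))). pose proof (Rabs_pos (phi1 (H0 1%nat i))). lra. Qed.

Lemma psi_bounds J : valid_outcomes M J -> forall t,
  0 <= psi0 (H0 0%nat (J t)) <= 2 * B0 /\ 0 <= psi1 (H0 1%nat (J t)) <= 2 * B0.
Proof.
  intros HJ t. pose proof (B0_bound (J t) (HJ t)). unfold psi0, psi1.
  pose proof (Rabs_pos (phi0 (H0 0%nat (J t)))). pose proof (Rabs_pos (phi1 (H0 1%nat (J t)))).
  pose proof (Rle_abs (phi0 (H0 0%nat (J t)))). pose proof (Rle_abs (phi1 (H0 1%nat (J t)))).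
  pose proof (Rle_abs (- phi0 (H0 0%nat (J t)))). pose proof (Rle_abs (- phi1 (H0 1%nat (J t)))).
  rewrite Rabs_Ropp in H5, H6. lra.
Qed.

Definition gsh j := L0 0%nat j - psi0 (H0 0%nat j).

Lemma L0_shift : forall i j, (i < 2)%nat -> (j < M)%nat -> L0 i j = ell psi0 psi1 H0 i j + gsh j.
Proof.
  intros i j Hi Hj. unfold ell, gsh, psi0, psi1. destruct i as [|[|]]; simpl; try lia. ring.
  pose proof (Hphi j Hj). lra.
Qed.

Lemma exp3_regret T J eta : (1 <= T)%nat -> 0 < eta -> valid_outcomes M J ->
  regret 2 L0 H0 (exp3 eta psi0 psi1) J T <= / eta * ln 2 + INR T * (2 * eta * (2 * B0) ^ 2).
Proof.
  intros HT He HJ. unfold regret. rewrite minupto1.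
  rewrite (exp_loss_shift 2 M L0 (ell psi0 psi1 H0) gsh H0 _ J (exp3_valid eta psi0 psi1) HJ L0_shift T [] 0).
  assert (HS : forall i, (i < 2)%nat -> fsum T (fun t => L0 i (J t)) = fsum T (fun t => ell psi0 psi1 H0 i (J t)) + fsum T (fun s => gsh (J (0 + s)%nat))).
  { intros. rewrite <- fsum_plus. apply fsum_ext. intros. simpl. apply L0_shift; auto. }
  rewrite (HS 0%nat), (HS 1%nat) by lia.
  assert (Hphi0 : Phi eta (e3state eta psi0 psi1 []) = - (/ eta * ln 2)).
  { unfold Phi, W. simpl. rewrite Rmult_0_r, Ropp_0, exp_0. replace (1+1) with 2 by ring. auto. }
  pose proof (exp3_main eta psi0 psi1 H0 J (2 * B0) 0 He ltac:(lia) (psi_bounds J HJ) T [] 0) as E0.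
  pose proof (exp3_main eta psi0 psi1 H0 J (2 * B0) 1 He ltac:(lia) (psi_bounds J HJ) T [] 0) as E1.
  rewrite Hphi0 in E0, E1. unfold sel in E0, E1. simpl in E0, E1. simpl Nat.add.
  unfold Rmin. destruct (Rle_dec _ _); lra.
Qed.

End Up.


Definition J0 : nat -> nat := fun _ => 0%nat.
Lemma J0_valid M : (1 <= M)%nat -> valid_outcomes M J0.
Proof. intros H t. unfold J0. lia. Qed.

Lemma sup_ge (S : R -> Prop) x y : is_sup S x -> S y -> y <= x.
Proof. intros [H _] Hy. auto. Qed.

Definition Ssum (L : matrix) (i T : nat) (J : nat -> nat) := fsum T (fun t => L i (J t)).

Lemma regret2 L H A J T : regret 2 L H A J T = exp_loss 2 L H A J [] 0 T - Rmin (Ssum L 0 T J) (Ssum L 1 T J).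
Proof. reflexivity. Qed.

Lemma avg_S M rho L i T J : distr M rho ->
  avgJ M rho T 0 (fun J' => Ssum L i T J') J = INR T * mom M rho (L i) 1.
Proof.
  intros Hd. rewrite (avg_ext M rho T 0 _ (fun J' => 0 + Xsum (L i) T 0 J')).
  rewrite avg_X0 by auto. ring.
  intros. unfold Ssum, Xsum. rewrite Rplus_0_l. apply fsum_ext; intros. reflexivity.
Qed.

Lemma sup_ge_avg M rho A L H T x : distr M rho -> (1 <= M)%nat ->
  is_sup (fun y => exists J, valid_outcomes M J /\ y = regret 2 L H A J T) x ->
  avgJ M rho T 0 (fun J => regret 2 L H A J T) J0 <= x.
Proof.
  intros Hd HM Hs. apply avg_bound; auto. intros. apply (sup_ge _ _ _ Hs). eauto.
  apply J0_valid; auto.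
Qed.

Lemma exp_loss_const N M (c : R) H A J : valid_strategy N A -> valid_outcomes M J ->
  forall k hist t, exp_loss N (fun _ _ => c) H A J hist t k = INR k * c.
Proof.
  intros HA HJ k hist t.
  rewrite (exp_loss_shift N M (fun _ _ => c) (fun _ _ => 0) (fun _ => c) H A J HA HJ) by (intros; ring).
  rewrite exp_loss_zero, fsum_const. ring.
Qed.

Lemma Rmin_abs a b : Rmin a b = (a + b) / 2 - Rabs (a - b) / 2.
Proof. unfold Rmin. destruct (Rle_dec a b). rewrite Rabs_left1 by lra. field. rewrite Rabs_right by lra. field. Qed.

Lemma abs_poly x a : 0 < a -> 3 * x ^ 2 / (2 * a) - x ^ 4 / (2 * a ^ 3) <= Rabs x.
Proof.
  intros Ha. set (y := Rabs x). assert (Hy : 0 <= y) by apply Rabs_pos.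
  assert (x ^ 2 = y ^ 2) by (unfold y; destruct (Rcase_abs x); [rewrite Rabs_left|rewrite Rabs_right]; auto; ring).
  assert (x ^ 4 = y ^ 4) by (unfold y; destruct (Rcase_abs x); [rewrite Rabs_left|rewrite Rabs_right]; auto; ring).
  rewrite H, H0.
  assert (0 <= (y - a) ^ 2) by (apply pow2_ge_0).
  assert (0 <= y * (y - a) ^ 2) by (apply Rmult_le_pos; auto).
  assert (0 <= y * (y - a) ^ 2 * (y + 2 * a)) by (apply Rmult_le_pos; lra).
  assert (0 < 2 * a ^ 3) by (apply Rmult_lt_0_compat; [lra| apply pow_lt; auto]).
  apply (Rmult_le_reg_r (2 * a ^ 3)); auto.
  replace ((3 * y ^ 2 / (2 * a) - y ^ 4 / (2 * a ^ 3)) * (2 * a ^ 3)) with (3 * a ^ 2 * y ^ 2 - y ^ 4) by (field; lra).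
  nra.
Qed.


Lemma avg_ext_valid M rho k : forall t F G J,
  (forall J', valid_outcomes M J' -> F J' = G J') -> valid_outcomes M J ->
  avgJ M rho k t F J = avgJ M rho k t G J.
Proof.
  induction k; intros; simpl; auto. apply fsum_ext; intros. f_equal. apply IHk; auto. apply upd_valid; auto.
Qed.

Lemma numeric_bound m2 m4 T : 0 < m2 -> 0 <= m4 -> (1 <= T) ->
  let K := m4 + 3 * m2 ^ 2 in let bt := 1 + K / m2 in let a := bt * sqrt T in
  m2 / bt * sqrt T <= 3 * (T * m2) / (2 * a) - (T * m4 + 3 * T * (T - 1) * m2 ^ 2) / (2 * a ^ 3).
Proof.
  intros Hm2 Hm4 HT K bt a.
  assert (HK : 0 < K) by (unfold K; nra).
  assert (Hb1 : 1 <= bt) by (unfold bt; assert (0 <= K / m2) by (apply Rlt_le, Rdiv_lt_0_compat; auto); lra).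
  assert (Hb2 : K / m2 <= bt) by (unfold bt; lra).
  assert (Hbb : K <= m2 * bt ^ 2).
  { assert (bt <= bt ^ 2) by (simpl; nra). assert (Hq : K / m2 <= bt ^ 2) by lra. apply (Rmult_le_compat_l m2) in Hq; [|lra].
    replace (m2 * (K / m2)) with K in Hq by (field; lra). lra. }
  set (s := sqrt T). assert (Hs : 0 < s) by (unfold s; apply sqrt_lt_R0; lra).
  assert (HsT : s * s = T) by (unfold s; apply sqrt_sqrt; lra).
  assert (HX : T * m4 + 3 * T * (T - 1) * m2 ^ 2 <= T ^ 2 * K).
  { unfold K. assert (0 <= (T*T - T) * m4) by (apply Rmult_le_pos; nra).
    assert (0 <= 3 * T * m2^2) by (apply Rmult_le_pos; nra). nra. }
  assert (Ha : a = bt * s) by reflexivity.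
  assert (Hapos : 0 < a) by (rewrite Ha; nra).
  assert (E1 : 3 * (T * m2) / (2 * a) = 3 * s * m2 / (2 * bt)) by (rewrite Ha, <- HsT; field; lra).
  assert (E2 : (T * m4 + 3 * T * (T - 1) * m2 ^ 2) / (2 * a ^ 3) <= s * K / (2 * bt ^ 3)).
  { apply (Rmult_le_reg_r (2 * a ^ 3)). apply Rmult_lt_0_compat; [lra|apply pow_lt; auto].
    replace ((T * m4 + 3 * T * (T - 1) * m2 ^ 2) / (2 * a ^ 3) * (2 * a ^ 3)) with (T * m4 + 3 * T * (T - 1) * m2 ^ 2) by (field; lra).
    replace (s * K / (2 * bt ^ 3) * (2 * a ^ 3)) with (T ^ 2 * K) by (rewrite Ha, <- HsT; field; lra). auto. }
  assert (E3 : s * K / (2 * bt ^ 3) <= s * m2 / (2 * bt)).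
  { apply (Rmult_le_reg_r (2 * bt ^ 3)). apply Rmult_lt_0_compat; [lra|apply pow_lt; lra].
    replace (s * K / (2 * bt ^ 3) * (2 * bt ^ 3)) with (s * K) by (field; lra).
    replace (s * m2 / (2 * bt) * (2 * bt ^ 3)) with (s * (m2 * bt ^ 2)) by (field; lra).
    apply Rmult_le_compat_l; lra. }
  rewrite E1. replace (m2 / bt * s) with (3 * s * m2 / (2 * bt) - s * m2 / (2 * bt)) by (field; lra).
  lra.
Qed.

Lemma avg_regret_sym M rho L H A T : distr M rho -> valid_strategy 2 A ->
  mom M rho (fun j => L 0%nat j - L 1%nat j) 1 = 0 ->
  avgJ M rho T 0 (fun J => regret 2 L H A J T) J0 =
  / 2 * avgJ M rho T 0 (fun J => Rabs (Xsum (fun j => L 0%nat j - L 1%nat j) T 0 J)) J0.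
Proof.
  intros Hd HA Hm.
  set (mu := mom M rho (L 0%nat) 1).
  assert (Hmu1 : mom M rho (L 1%nat) 1 = mu).
  { unfold mu. unfold mom in *.
    assert (E : fsum M (fun j => rho j * L 1%nat j ^ 1) = fsum M (fun j => rho j * L 0%nat j ^ 1 - rho j * (L 0%nat j - L 1%nat j) ^ 1)) by (apply fsum_ext; intros; ring).
    rewrite E, fsum_minus, Hm. ring. }
  rewrite (avg_ext M rho T 0 _ (fun J => exp_loss 2 L H A J [] 0 T - (Ssum L 0 T J + Ssum L 1 T J) / 2 + / 2 * Rabs (Xsum (fun j => L 0%nat j - L 1%nat j) T 0 J))).
  2:{ intros. rewrite regret2, Rmin_abs. unfold Ssum, Xsum. rewrite <- fsum_minus. simpl Nat.add. field. }
  rewrite avg_plus, avg_minus, avg_scal.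
  rewrite (avg_exp_mean M rho 2 L H A Hd T [] 0 J0).
  rewrite (avg_ext_valid M rho T 0 _ (fun _ => INR T * mu)).
  2:{ intros. rewrite (exp_loss_shift 2 M (meanL M rho L) (fun _ _ => 0) (fun _ => mu) H A J' HA H0).
      rewrite exp_loss_zero, fsum_const. ring.
      intros. unfold meanL. destruct i as [|[|]]; try lia; [unfold mu, mom| rewrite <- Hmu1; unfold mom];
      rewrite Rplus_0_l; apply fsum_ext; intros; ring. }
  2:{ apply J0_valid. destruct Hd as [_ Hs]. destruct M; [simpl in Hs; lra| lia]. }
  rewrite avg_const by auto.
  rewrite (avg_ext M rho T 0 _ (fun J => / 2 * Ssum L 0 T J + / 2 * Ssum L 1 T J)) by (intros; field).
  rewrite avg_plus, !avg_scal, !avg_S by auto. rewrite Hmu1. fold mu. field.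
Qed.


Lemma sqrt_lb M L H rho : distr M rho -> (1 <= M)%nat ->
  mom M rho (fun j => L 0%nat j - L 1%nat j) 1 = 0 ->
  0 < mom M rho (fun j => L 0%nat j - L 1%nat j) 2 ->
  exists c, 0 < c /\ forall T, (1 <= T)%nat -> forall A x, valid_strategy 2 A ->
    is_sup (fun y => exists J, valid_outcomes M J /\ y = regret 2 L H A J T) x ->
    c * sqrt (INR T) <= x.
Proof.
  intros Hd HM Hm1 Hm2.
  set (d := fun j => L 0%nat j - L 1%nat j) in *.
  set (m2 := mom M rho d 2) in *. set (m4 := mom M rho d 4).
  assert (Hm4 : 0 <= m4).
  { unfold m4, mom. rewrite <- (fsum_zero M). apply fsum_le. intros. destruct Hd as [Hp _].
    apply Rmult_le_pos; auto. replace (d i ^ 4) with ((d i ^ 2) ^ 2) by ring. apply pow2_ge_0. }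
  set (K := m4 + 3 * m2 ^ 2). set (bt := 1 + K / m2).
  assert (Hbt : 0 < bt).
  { unfold bt, K. assert (0 <= (m4 + 3 * m2 ^ 2) / m2). apply Rlt_le, Rdiv_lt_0_compat; nra. lra. }
  exists (m2 / (2 * bt)). split. apply Rdiv_lt_0_compat; lra.
  intros T HT A x HA Hs.
  assert (HTr : 1 <= INR T) by (apply (le_INR 1) in HT; simpl in HT; auto).
  pose proof (numeric_bound m2 m4 (INR T) Hm2 Hm4 HTr) as NB. simpl in NB. fold K bt in NB.
  set (a := bt * sqrt (INR T)) in NB.
  assert (Ha : 0 < a) by (unfold a; apply Rmult_lt_0_compat; auto; apply sqrt_lt_R0; lra).
  pose proof (sup_ge_avg M rho A L H T x Hd HM Hs) as S1.
  rewrite (avg_regret_sym M rho L H A T Hd HA Hm1) in S1. fold d in S1.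
  assert (S2 : avgJ M rho T 0 (fun J => 3 / (2 * a) * (0 + Xsum d T 0 J) ^ 2 + (- / (2 * a ^ 3)) * (0 + Xsum d T 0 J) ^ 4) J0
     <= avgJ M rho T 0 (fun J => Rabs (Xsum d T 0 J)) J0).
  { apply avg_le; auto. intros. rewrite Rplus_0_l. pose proof (abs_poly (Xsum d T 0 J') a Ha).
    replace (3 / (2 * a) * Xsum d T 0 J' ^ 2 + - / (2 * a ^ 3) * Xsum d T 0 J' ^ 4) with
      (3 * Xsum d T 0 J' ^ 2 / (2 * a) - Xsum d T 0 J' ^ 4 / (2 * a ^ 3)) by (field; lra). auto.
    apply J0_valid; auto. }
  rewrite avg_plus, !avg_scal in S2.
  rewrite (avg_X2 M rho T d Hd Hm1 0 0 J0) in S2. rewrite (avg_X4 M rho T d Hd Hm1 0 0 J0) in S2.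
  fold m2 m4 in S2.
  assert (E : 3 / (2 * a) * (0 ^ 2 + INR T * m2) + - / (2 * a ^ 3) * (0 ^ 4 + 6 * 0 ^ 2 * INR T * m2 + 4 * 0 * INR T * mom M rho d 3 + INR T * m4 + 3 * INR T * (INR T - 1) * m2 ^ 2)
     = 3 * (INR T * m2) / (2 * a) - (INR T * m4 + 3 * INR T * (INR T - 1) * m2 ^ 2) / (2 * a ^ 3)) by (field; lra).
  rewrite E in S2.
  replace (m2 / (2 * bt) * sqrt (INR T)) with (/ 2 * (m2 / bt * sqrt (INR T))) by (field; lra).
  eapply Rle_trans; [|exact S1]. apply Rmult_le_compat_l; [lra|].
  eapply Rle_trans; [exact NB|]. exact S2.
Qed.


Lemma fsum_ind M j1 c : (j1 < M)%nat -> fsum M (fun j => if Nat.eqb j j1 then c else 0) = c.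
Proof.
  intros. rewrite (fsum_single M j1); auto. rewrite Nat.eqb_refl; auto.
  intros. destruct (Nat.eqb_spec i j1); auto; lia.
Qed.

Lemma rho_exists M d j1 : (j1 < M)%nat -> d j1 <> 0 -> d j1 * fsum M d <= 0 ->
  exists rho Z, 0 < Z /\ (forall j, (j < M)%nat -> / Z <= rho j) /\ fsum M rho = 1 /\
     fsum M (fun j => rho j * d j) = 0.
Proof.
  intros Hj Hd Hs. set (s := fsum M d) in *.
  set (al := - s / d j1).
  assert (Hal : 0 <= al).
  { unfold al. replace (- s / d j1) with (- (d j1 * s) / (d j1 * d j1)) by (field; auto).
    apply Rmult_le_pos; [lra|]. left. apply Rinv_0_lt_compat. assert (0 < d j1 * d j1) by (apply Rsqr_pos_lt in Hd; auto). lra. }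
  set (Z := INR M + al).
  assert (HM : 1 <= INR M) by (apply (le_INR 1); lia).
  assert (HZ : 0 < Z) by (unfold Z; lra).
  exists (fun j => (1 + (if Nat.eqb j j1 then al else 0)) / Z), Z. split; auto. split; [|split].
  - intros. unfold Rdiv. rewrite <- (Rmult_1_l (/ Z)) at 1. apply Rmult_le_compat_r.
    left; apply Rinv_0_lt_compat; auto. destruct (Nat.eqb j j1); lra.
  - rewrite (fsum_ext M _ (fun j => / Z * (1 + (if Nat.eqb j j1 then al else 0)))) by (intros; unfold Rdiv; ring).
    rewrite fsum_scal, fsum_plus, fsum_const, fsum_ind by auto. unfold Z. field. lra.
  - rewrite (fsum_ext M _ (fun j => / Z * (d j + (if Nat.eqb j j1 then al * d j1 else 0)))).
    2:{ intros. destruct (Nat.eqb_spec i j1). subst. field. lra. field. lra. }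
    rewrite fsum_scal, fsum_plus, fsum_ind by auto. fold s. unfold al. field. split; auto; lra.
Qed.

Definition Lind : matrix := fun i _ => if Nat.eqb i 0 then 1 else 0.

Lemma Lind_bounds M H A J : valid_strategy 2 A -> valid_outcomes M J ->
  forall k, 0 <= exp_loss 2 Lind H A J [] 0 k <= INR k.
Proof.
  intros HA HJ k. split.
  - apply (exp_loss_nonneg 2 M); auto. intros. unfold Lind. destruct (Nat.eqb i 0); lra.
  - rewrite <- (Rmult_1_r (INR k)). rewrite <- (exp_loss_const 2 M 1 H A J HA HJ k [] 0).
    apply (exp_loss_mono 2 M); auto. intros. unfold Lind. destruct (Nat.eqb i 0); lra.
Qed.

Lemma avg_regret_lb M P L H A T b : distr M P -> valid_strategy 2 A -> (b < 2)%nat -> (1 <= M)%nat ->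
  let mu i := fsum M (fun j => P j * L i j) in
  INR T * mu 1%nat + (mu 0%nat - mu 1%nat) * avgJ M P T 0 (fun J => exp_loss 2 Lind H A J [] 0 T) J0 - INR T * mu b
  <= avgJ M P T 0 (fun J => regret 2 L H A J T) J0.
Proof.
  intros Hd HA Hb HM mu.
  assert (E1 : avgJ M P T 0 (fun J => regret 2 L H A J T) J0 >= avgJ M P T 0 (fun J => exp_loss 2 L H A J [] 0 T - Ssum L b T J) J0).
  { apply Rle_ge. apply avg_le; auto. intros. rewrite regret2.
    assert (Rmin (Ssum L 0 T J') (Ssum L 1 T J') <= Ssum L b T J').
    { destruct b as [|[|]]; try lia. apply Rmin_l. apply Rmin_r. } lra. apply J0_valid; auto. }
  rewrite avg_minus in E1. rewrite avg_S in E1 by auto.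
  rewrite (avg_exp_mean M P 2 L H A Hd T [] 0 J0) in E1.
  rewrite (avg_ext_valid M P T 0 (fun J' => exp_loss 2 (meanL M P L) H A J' [] 0 T)
     (fun J' => INR T * mu 1%nat + (mu 0%nat - mu 1%nat) * exp_loss 2 Lind H A J' [] 0 T)) in E1.
  2:{ intros J' HJ'.
      rewrite (exp_loss_shift 2 M (meanL M P L) (fun i j => (mu 0%nat - mu 1%nat) * Lind i j) (fun _ => mu 1%nat) H A J' HA HJ').
      rewrite exp_loss_scal, fsum_const. ring.
      intros. unfold meanL, Lind. destruct i as [|[|]]; try lia; simpl; fold (mu 0%nat); fold (mu 1%nat); ring. }
  2:{ apply J0_valid; auto. }
  rewrite avg_plus, avg_const, avg_scal in E1 by auto.
  assert (mom M P (L b) 1 = mu b) by (unfold mom, mu; apply fsum_ext; intros; ring).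
  rewrite H0 in E1. lra.
Qed.


Lemma linear_case M L H : (1 <= M)%nat ->
  (exists rho Z, 0 < Z /\ (forall j, (j < M)%nat -> / Z <= rho j) /\ fsum M rho = 1 /\
     fsum M (fun j => rho j * (L 0%nat j - L 1%nat j)) = 0) ->
  (exists w, (forall i, (i < 2)%nat -> forall g : R -> R, fsum M (fun j => w j * g (H i j)) = 0) /\
     fsum M (fun j => w j * (L 0%nat j - L 1%nat j)) <> 0) ->
  exists c, 0 < c /\ forall T A x, valid_strategy 2 A ->
    is_sup (fun y => exists J, valid_outcomes M J /\ y = regret 2 L H A J T) x -> c * INR T <= x.
Proof.
  intros HM [rho [Z [HZ [Hlow [Hs Hd0]]]]] [w0 [Hw0 HD0]].
  set (d := fun j => L 0%nat j - L 1%nat j) in *.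
  assert (Hw : exists w, (forall i, (i < 2)%nat -> forall g : R -> R, fsum M (fun j => w j * g (H i j)) = 0) /\
     0 < fsum M (fun j => w j * d j)).
  { destruct (Rlt_dec 0 (fsum M (fun j => w0 j * d j))). exists w0; auto.
    exists (fun j => - w0 j). split.
    - intros i Hi g. rewrite (fsum_ext M _ (fun j => (-1) * (w0 j * g (H i j)))) by (intros; ring).
      rewrite fsum_scal, (Hw0 i Hi). ring.
    - rewrite (fsum_ext M _ (fun j => (-1) * (w0 j * d j))) by (intros; ring). rewrite fsum_scal.
      apply Rnot_lt_le in n. destruct n; [lra| contradiction]. }
  clear w0 Hw0 HD0. destruct Hw as [w [Hw HD]].
  set (D := fsum M (fun j => w j * d j)) in *.
  set (S := fsum M (fun j => Rabs (w j))).
  assert (HwS : forall j, (j < M)%nat -> Rabs (w j) <= S).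
  { intros. apply (fsum_abs_le M (fun j => Rabs (w j))); auto. intros; apply Rabs_pos. }
  assert (HS : 0 <= S) by (unfold S; rewrite <- (fsum_zero M); apply fsum_le; intros; apply Rabs_pos).
  set (eps := / (Z * (1 + S))).
  assert (Heps : 0 < eps) by (unfold eps; apply Rinv_0_lt_compat; nra).
  assert (HepsS : eps * S < / Z).
  { unfold eps. rewrite Rinv_mult. replace (/ Z * / (1 + S) * S) with (/ Z * (S / (1 + S))) by (field; lra).
    rewrite <- (Rmult_1_r (/ Z)) at 2. apply Rmult_lt_compat_l. apply Rinv_0_lt_compat; auto.
    apply (Rmult_lt_reg_r (1 + S)); [lra|]. replace (S / (1 + S) * (1 + S)) with S by (field; lra). lra. }
  assert (Hw1 : fsum M w = 0).
  { pose proof (Hw 0%nat ltac:(lia) (fun _ => 1)) as Hw'. cbv beta in Hw'. rewrite <- Hw'. apply fsum_ext; intros; ring. }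
  set (P := fun j => rho j + eps * w j). set (Q := fun j => rho j - eps * w j).
  assert (Hwb : forall j, (j < M)%nat -> eps * Rabs (w j) < / Z).
  { intros. eapply Rle_lt_trans; [|exact HepsS]. apply Rmult_le_compat_l; [lra|auto]. }
  assert (HP : distr M P).
  { split.
    - intros. unfold P. specialize (Hwb j H0). specialize (Hlow j H0). pose proof (Rle_abs (w j)). pose proof (Rle_abs (- w j)).
      rewrite Rabs_Ropp in H2. nra.
    - unfold P. rewrite fsum_plus, fsum_scal, Hw1, Hs. ring. }
  assert (HQ : distr M Q).
  { split.
    - intros. unfold Q. specialize (Hwb j H0). specialize (Hlow j H0). pose proof (Rle_abs (w j)). pose proof (Rle_abs (- w j)).
      rewrite Rabs_Ropp in H2. nra.
    - unfold Q. rewrite fsum_minus, fsum_scal, Hw1, Hs. ring. }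
  assert (HPQ : forall i, (i < 2)%nat -> forall g : R -> R,
     fsum M (fun j => P j * g (H i j)) = fsum M (fun j => Q j * g (H i j))).
  { intros. unfold P, Q.
    rewrite (fsum_ext M (fun j => (rho j + eps * w j) * g (H i j)) (fun j => rho j * g (H i j) + eps * (w j * g (H i j)))) by (intros; ring).
    rewrite (fsum_ext M (fun j => (rho j - eps * w j) * g (H i j)) (fun j => rho j * g (H i j) - eps * (w j * g (H i j)))) by (intros; ring).
    rewrite fsum_plus, fsum_minus, !fsum_scal, Hw by auto. ring. }
  assert (HdP : fsum M (fun j => P j * L 0%nat j) - fsum M (fun j => P j * L 1%nat j) = eps * D).
  { rewrite <- fsum_minus. unfold P, D.
    rewrite (fsum_ext M _ (fun j => rho j * d j + eps * (w j * d j))) by (intros; unfold d; ring).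
    rewrite fsum_plus, fsum_scal. replace (fsum M (fun j => rho j * d j)) with 0 by (rewrite <- Hd0; apply fsum_ext; intros; reflexivity). ring. }
  assert (HdQ : fsum M (fun j => Q j * L 0%nat j) - fsum M (fun j => Q j * L 1%nat j) = - (eps * D)).
  { rewrite <- fsum_minus. unfold Q, D.
    rewrite (fsum_ext M _ (fun j => rho j * d j - eps * (w j * d j))) by (intros; unfold d; ring).
    rewrite fsum_minus, fsum_scal. replace (fsum M (fun j => rho j * d j)) with 0 by (rewrite <- Hd0; apply fsum_ext; intros; reflexivity). ring. }
  exists (eps * D / 2). split. apply Rdiv_lt_0_compat; nra.
  intros T A x HA Hsup.
  pose proof (avg_regret_lb M P L H A T 1 HP HA ltac:(lia) HM) as LP. simpl in LP.
  pose proof (avg_regret_lb M Q L H A T 0 HQ HA ltac:(lia) HM) as LQ. simpl in LQ.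
  pose proof (sup_ge_avg M P A L H T x HP HM Hsup) as SP.
  pose proof (sup_ge_avg M Q A L H T x HQ HM Hsup) as SQ.
  assert (HnPQ : avgJ M P T 0 (fun J => exp_loss 2 Lind H A J [] 0 T) J0 = avgJ M Q T 0 (fun J => exp_loss 2 Lind H A J [] 0 T) J0).
  { apply (avg_indist M P Q 2 (fun i => if Nat.eqb i 0 then 1 else 0) H A HP HQ HPQ). }
  set (n := avgJ M P T 0 (fun J => exp_loss 2 Lind H A J [] 0 T)) in *.
  rewrite <- HnPQ in LQ.
  rewrite HdP in LP. rewrite HdQ in LQ.
  set (e := eps * D) in *.
  set (u1 := fsum M (fun j => P j * L 1%nat j)) in *.
  set (v0 := fsum M (fun j => Q j * L 0%nat j)) in *.
  set (v1 := fsum M (fun j => Q j * L 1%nat j)) in *.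
  assert (Hv : v1 = v0 + e) by lra.
  rewrite Hv in LQ.
  assert (LQ' : e * INR T - e * n J0 <= x) by (replace (e * INR T - e * n J0) with (INR T * (v0 + e) + - e * n J0 - INR T * v0) by ring; lra).
  assert (LP' : e * n J0 <= x) by (replace (e * n J0) with (INR T * u1 + e * n J0 - INR T * u1) by ring; lra).
  replace (e / 2 * INR T) with ((e * INR T - e * n J0 + e * n J0) / 2) by field. lra.
Qed.


Definition Adet (a : nat) : strategy := fun _ i => if Nat.eqb i a then 1 else 0.

Lemma Adet_valid a : (a < 2)%nat -> valid_strategy 2 (Adet a).
Proof.
  intros Ha hist. split. intros. unfold Adet. destruct (Nat.eqb i a); lra.
  rewrite fsum_two. unfold Adet. destruct a as [|[|]]; simpl; try lia; ring.
Qed.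

Lemma exp_loss_det L H J a : (a < 2)%nat -> forall k hist t,
  exp_loss 2 L H (Adet a) J hist t k = fsum k (fun s => L a (J (t + s)%nat)).
Proof.
  intros Ha. induction k; intros; [reflexivity|].
  rewrite exp_loss_S, fsum_two. rewrite !IHk.
  rewrite fsum_shift, Nat.add_0_r.
  rewrite (fsum_ext k (fun i => L a (J (t + S i)%nat)) (fun s => L a (J (S t + s)%nat))) by (intros; f_equal; f_equal; lia).
  unfold Adet. destruct a as [|[|]]; simpl; try lia; ring.
Qed.

Lemma dominated M L H a : (1 <= M)%nat -> (a < 2)%nat ->
  (forall j, (j < M)%nat -> L a j <= L (1 - a)%nat j) ->
  forall T, minimax_regret 2 M L H T 0.
Proof.
  intros HM Ha Hdom T.
  assert (Hlo : forall j i, (i < 2)%nat -> (j < M)%nat -> L a j <= L i j).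
  { intros. destruct (Nat.eq_dec i a). subst; lra. replace i with (1 - a)%nat by lia. auto. }
  assert (HSa : forall J, valid_outcomes M J -> Ssum L a T J <= Ssum L (1 - a)%nat T J).
  { intros. unfold Ssum. apply fsum_le. intros. apply Hdom. apply H0. }
  assert (Hmin : forall J, valid_outcomes M J -> Rmin (Ssum L 0 T J) (Ssum L 1 T J) = Ssum L a T J).
  { intros. specialize (HSa J H0). destruct a as [|[|]]; try lia; simpl in HSa; unfold Rmin;
    destruct (Rle_dec _ _); try lra. }
  assert (Hpos : forall A J, valid_strategy 2 A -> valid_outcomes M J -> 0 <= regret 2 L H A J T).
  { intros. rewrite regret2, Hmin by auto.
    assert (exp_loss 2 (fun _ j => L a j) H A J [] 0 T <= exp_loss 2 L H A J [] 0 T).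
    { apply (exp_loss_mono 2 M); auto. }
    rewrite (exp_loss_shift 2 M (fun _ j => L a j) (fun _ _ => 0) (fun j => L a j) H A J H0 H1) in H2 by (intros; ring).
    rewrite exp_loss_zero in H2. unfold Ssum. simpl Nat.add in H2. lra. }
  split.
  - intros y [A [HA Hs]]. apply (Rle_trans _ (regret 2 L H A J0 T)).
    apply Hpos; auto. apply J0_valid; auto. apply (sup_ge _ _ _ Hs). exists J0. split; auto. apply J0_valid; auto.
  - intros z Hz. apply Hz. exists (Adet a). split. apply Adet_valid; auto.
    assert (Hr : forall J, valid_outcomes M J -> regret 2 L H (Adet a) J T = 0).
    { intros. rewrite regret2, Hmin by auto. rewrite exp_loss_det by auto. unfold Ssum. simpl Nat.add. ring. }
    split.
    + intros y [J [HJ ->]]. rewrite Hr; auto. lra.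
    + intros b Hb. rewrite <- (Hr J0) by (apply J0_valid; auto). apply Hb. exists J0. split; auto. apply J0_valid; auto.
Qed.


Lemma game_alt M (L H : matrix) :
  (exists phi0 phi1 : R -> R, forall j, (j < M)%nat -> L 0%nat j - L 1%nat j = phi0 (H 0%nat j) - phi1 (H 1%nat j)) \/
  (exists w, (forall i, (i < 2)%nat -> forall g : R -> R, fsum M (fun j => w j * g (H i j)) = 0) /\
     fsum M (fun j => w j * (L 0%nat j - L 1%nat j)) <> 0).
Proof.
  set (gen := fun k j => if Nat.ltb k M then indR (H 0%nat j) (H 0%nat k) else indR (H 1%nat j) (H 1%nat (k - M)%nat)).
  destruct (fredholm M (M + M) gen (fun j => L 0%nat j - L 1%nat j)) as [[c Hc] | [w [Hw Hwd]]].
  - left. exists (fun s => fsum M (fun k => c k * indR s (H 0%nat k))).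
    exists (fun s => - fsum M (fun k => c (M + k)%nat * indR s (H 1%nat k))).
    intros j Hj. rewrite Hc by auto. rewrite fsum_split. unfold gen.
    rewrite (fsum_ext M (fun k => c k * (if Nat.ltb k M then _ else _)) (fun k => c k * indR (H 0%nat j) (H 0%nat k))).
    2:{ intros. destruct (Nat.ltb_spec i M); [auto|lia]. }
    rewrite (fsum_ext M (fun k => c (M + k)%nat * (if Nat.ltb (M + k) M then _ else _)) (fun k => c (M + k)%nat * indR (H 1%nat j) (H 1%nat k))).
    2:{ intros. destruct (Nat.ltb_spec (M + i) M); [lia|]. do 3 f_equal. lia. }
    ring.
  - right. exists w. split; auto. intros i Hi g. apply orth_all. intros k Hk.
    destruct i as [|[|]]; try lia.
    + specialize (Hw k ltac:(lia)). unfold dot, gen in Hw. rewrite <- Hw. apply fsum_ext; intros.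
      destruct (Nat.ltb_spec k M); [auto|lia].
    + specialize (Hw (M + k)%nat ltac:(lia)). unfold dot, gen in Hw. rewrite <- Hw. apply fsum_ext; intros.
      destruct (Nat.ltb_spec (M + k) M); [lia|]. do 3 f_equal. lia.
Qed.


Section Easy.
Variables (M : nat) (L0 H0 : matrix) (phi0 phi1 : R -> R).
Hypothesis Hphi : forall j, (j < M)%nat -> L0 0%nat j - L0 1%nat j = phi0 (H0 0%nat j) - phi1 (H0 1%nat j).

Definition Lb : matrix := ell phi0 phi1 H0.
Definition tr (x : nat * R) : nat * R := (fst x, if Nat.eqb (fst x) 0 then phi0 (snd x) else phi1 (snd x)).
Definition Atr (A : strategy) : strategy := fun hist i => A (map tr hist) i.

Lemma tr_step i j : (i < 2)%nat -> tr (i, H0 i j) = (i, Lb i j).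
Proof. intros. unfold tr, Lb, ell. destruct i as [|[|]]; simpl; auto; lia. Qed.

Lemma seqprob_tr A J : forall a, Forall (fun i => (i < 2)%nat) a -> forall hist t,
  seqprob H0 (Atr A) J hist t a = seqprob Lb A J (map tr hist) t a.
Proof.
  induction a as [|i a IH]; intros Ha hist t; [reflexivity|].
  inversion Ha; subst. simpl. rewrite IH by auto. rewrite map_app. simpl. rewrite tr_step by auto.
  unfold Atr. reflexivity.
Qed.

Lemma exp_loss_tr A J : forall k hist t,
  exp_loss 2 L0 H0 (Atr A) J hist t k = exp_loss 2 L0 Lb A J (map tr hist) t k.
Proof.
  induction k; intros; [reflexivity|]. rewrite !exp_loss_S. apply fsum_ext; intros.
  rewrite IHk. rewrite map_app. simpl. rewrite tr_step by auto. reflexivity.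
Qed.

Definition gb j := L0 0%nat j - phi0 (H0 0%nat j).

Lemma L0_Lb : forall i j, (i < 2)%nat -> (j < M)%nat -> L0 i j = Lb i j + gb j.
Proof.
  intros i j Hi Hj. unfold Lb, ell, gb. destruct i as [|[|]]; simpl; try lia. ring.
  pose proof (Hphi j Hj). lra.
Qed.

Lemma Rmin_plus a b c : Rmin (a + c) (b + c) = Rmin a b + c.
Proof. unfold Rmin. destruct (Rle_dec (a + c) (b + c)), (Rle_dec a b); lra. Qed.

Lemma easier_part : easier 2 M L0 H0 Lb Lb.
Proof.
  intros A HA. exists (Atr A). split.
  - intros hist. split. intros. apply HA; auto. apply HA.
  - intros J HJ. split.
    + intros a Ha. apply seqprob_tr; auto.
    + intros T. unfold regret. rewrite exp_loss_tr. simpl map.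
      rewrite (exp_loss_shift 2 M L0 Lb gb Lb A J HA HJ L0_Lb T [] 0).
      simpl Nat.sub.
      assert (HS : forall i, (i < 2)%nat -> fsum T (fun t => L0 i (J t)) = fsum T (fun t => Lb i (J t)) + fsum T (fun s => gb (J (0 + s)%nat))).
      { intros. rewrite <- fsum_plus. apply fsum_ext. intros. simpl. apply L0_Lb; auto. }
      simpl minupto. rewrite (HS 0%nat), (HS 1%nat) by lia. rewrite Rmin_plus. lra.
Qed.
End Easy.


Lemma minimax_exists M L H T (lo hi : R) (A0 : strategy) :
  valid_strategy 2 A0 -> (1 <= M)%nat ->
  (forall J, valid_outcomes M J -> regret 2 L H A0 J T <= hi) ->
  (forall A x, valid_strategy 2 A ->
     is_sup (fun y => exists J, valid_outcomes M J /\ y = regret 2 L H A J T) x -> lo <= x) ->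
  exists r, minimax_regret 2 M L H T r /\ lo <= r /\ r <= hi.
Proof.
  intros HA0 HM Hhi Hlo.
  set (E := fun y => exists J, valid_outcomes M J /\ y = regret 2 L H A0 J T).
  destruct (completeness E) as [m [Hm1 Hm2]].
  { exists hi. intros y [J [HJ ->]]. auto. }
  { exists (regret 2 L H A0 J0 T). exists J0. split; auto. apply J0_valid; auto. }
  assert (Hmhi : m <= hi) by (apply Hm2; intros y [J [HJ ->]]; auto).
  set (S := fun x => exists A, valid_strategy 2 A /\ is_sup (fun y => exists J, valid_outcomes M J /\ y = regret 2 L H A J T) x).
  assert (HSm : S m) by (exists A0; split; auto; split; auto).
  set (F := fun y => S (- y)).
  destruct (completeness F) as [q [Hq1 Hq2]].
  { exists (- lo). intros y [A [HA Hs]]. specialize (Hlo A _ HA Hs). lra. }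
  { exists (- m). unfold F. rewrite Ropp_involutive. auto. }
  exists (- q). split; [|split].
  - split.
    + intros x Hx. assert (F (- x)) by (unfold F; rewrite Ropp_involutive; auto). specialize (Hq1 _ H0). lra.
    + intros z Hz. assert (q <= - z). { apply Hq2. intros y Hy. specialize (Hz _ Hy). lra. } lra.
  - assert (q <= - lo). { apply Hq2. intros y [A [HA Hs]]. specialize (Hlo A _ HA Hs). lra. } lra.
  - assert (- m <= q) by (apply Hq1; unfold F; rewrite Ropp_involutive; auto). lra.
Qed.

Lemma inf_lb M L H T lo r :
  (forall A x, valid_strategy 2 A ->
     is_sup (fun y => exists J, valid_outcomes M J /\ y = regret 2 L H A J T) x -> lo <= x) ->
  minimax_regret 2 M L H T r -> lo <= r.
Proof. intros Hlo [_ Hr]. apply Hr. intros y [A [HA Hs]]. eauto. Qed.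

Theorem theorem3 (M : nat) (L0 H0 : matrix) :
  (1 <= M)%nat ->
  (forall i j, (i < 2)%nat -> (j < M)%nat -> 0 <= L0 i j <= 1) ->
  ~ trivial_game 2 M L0 H0 ->
  (exists L' : matrix, easier 2 M L0 H0 L' L') /\
  (exists c C, 0 < c /\ c <= C /\
     forall T : nat, (1 <= T)%nat ->
       exists r, minimax_regret 2 M L0 H0 T r /\
                 c * sqrt (INR T) <= r /\ r <= C * sqrt (INR T)).
Proof.
  intros HM HL Hnt.
  set (d := fun j => L0 0%nat j - L0 1%nat j).
  destruct (classic (exists jp, (jp < M)%nat /\ 0 < d jp)) as [[jp [Hjp Hdp]] | Hnp].
  2:{ exfalso. apply Hnt. left. apply (dominated M L0 H0 0); auto. intros j Hj. simpl.
      destruct (Rle_dec (d j) 0). unfold d in r; lra. exfalso; apply Hnp. exists j. split; auto. lra. }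
  destruct (classic (exists jm, (jm < M)%nat /\ d jm < 0)) as [[jm [Hjm Hdm]] | Hnm].
  2:{ exfalso. apply Hnt. left. apply (dominated M L0 H0 1); auto. intros j Hj. simpl.
      destruct (Rle_dec 0 (d j)). unfold d in r; lra. exfalso; apply Hnm. exists j. split; auto. lra. }
  assert (Hrho : exists rho Z, 0 < Z /\ (forall j, (j < M)%nat -> / Z <= rho j) /\ fsum M rho = 1 /\
     fsum M (fun j => rho j * d j) = 0).
  { destruct (Rle_dec 0 (fsum M d)).
    - apply (rho_exists M d jm); auto; lra || nra.
    - apply (rho_exists M d jp); auto; lra || nra. }
  destruct (game_alt M L0 H0) as [[phi0 [phi1 Hphi]] | Hw].
  2:{ exfalso. apply Hnt. right. destruct (linear_case M L0 H0 HM Hrho Hw) as [c [Hc Hlc]].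
      exists c. split; auto. intros T r Hr. apply (inf_lb M L0 H0 T); auto. intros; eauto. }
  split.
  { exists (Lb H0 phi0 phi1). apply easier_part. auto. }
  destruct Hrho as [rho [Z [HZ [Hlow [Hs Hd0]]]]].
  assert (Hdist : distr M rho).
  { split; auto. intros. specialize (Hlow j H). assert (0 < / Z) by (apply Rinv_0_lt_compat; auto). lra. }
  assert (Hm1 : mom M rho (fun j => L0 0%nat j - L0 1%nat j) 1 = 0).
  { rewrite <- Hd0. unfold mom. apply fsum_ext; intros. unfold d. ring. }
  assert (Hnn : forall j, (j < M)%nat -> 0 <= rho j * (fun j => L0 0%nat j - L0 1%nat j) j ^ 2).
  { intros. apply Rmult_le_pos; [destruct Hdist as [Hp _]; apply Hp; auto | apply pow2_ge_0]. }
  assert (Hm2 : 0 < mom M rho (fun j => L0 0%nat j - L0 1%nat j) 2).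
  { unfold mom. apply (fsum_pos M _ Hnn jp Hjp).
    apply Rmult_lt_0_compat. specialize (Hlow jp Hjp). assert (0 < / Z) by (apply Rinv_0_lt_compat; auto). lra.
    apply pow_lt. exact Hdp. }
  destruct (sqrt_lb M L0 H0 rho Hdist HM Hm1 Hm2) as [c [Hc Hlb]].
  set (B := 2 * B0 M H0 phi0 phi1).
  set (C := ln 2 + 2 * B ^ 2).
  assert (HC : 0 <= C) by (unfold C; pose proof ln_lt_2; pose proof (pow2_ge_0 B); lra).
  exists c, (C + c). split; auto. split; [lra|].
  intros T HT.
  assert (HTr : 1 <= INR T) by (apply (le_INR 1) in HT; simpl in HT; auto).
  set (s := sqrt (INR T)).
  assert (Hs0 : 0 < s) by (unfold s; apply sqrt_lt_R0; lra).
  assert (HsT : s * s = INR T) by (unfold s; apply sqrt_sqrt; lra).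
  set (eta := / s).
  assert (Heta : 0 < eta) by (unfold eta; apply Rinv_0_lt_compat; auto).
  apply (minimax_exists M L0 H0 T (c * s) ((C + c) * s) (exp3 eta (psi0 M H0 phi0 phi1) (psi1 M H0 phi0 phi1))).
  - apply exp3_valid.
  - auto.
  - intros J HJ. eapply Rle_trans. apply (exp3_regret M L0 H0 phi0 phi1 Hphi T J eta HT Heta HJ).
    fold B. unfold eta. rewrite Rinv_inv. rewrite <- HsT.
    replace (s * s * (2 * / s * B ^ 2)) with (2 * B ^ 2 * s) by (field; lra).
    assert (0 <= c * s) by nra. unfold C. nra.
  - intros A x HA Hsup. apply (Hlb T HT A x HA Hsup).
Qed.
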